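(* Let $N\in\mathbb{N}$, $N\geqslant 2$, let $v:[0,1]\to\mathbb{R}$ be continuous and let $f:[0,1]\times\mathbb{R}\to\mathbb{R}$ satisfy: (C(c)) $f$ is continuous on $[0,1]\times\mathbb{R}$ and has a continuous partial derivative $f_x$ with respect to the second variable on $[0,1]\times\mathbb{R}$; (D(f)) there exist positive constants $A,B$ with $A<1$ such that $|f(t,x)|\leqslant A|x|+B$ for all $t\in[0,1]$, $x\in\mathbb{R}$; (D($f_x$)) $\inf_{(t,x)\in[0,1]\times\mathbb{R}} f_x(t,x)>-1$. Then the discrete problem $$\Delta^2x(k-1)=\tfrac{1}{N^2}f\left(\tfrac{k}{N},x(k)\right)+\tfrac{1}{N^2}v\left(\tfrac{k}{N}\right),\ k\in\{1,\dots,N-1\},\qquad x(0)=x(N)=0,$$ has a unique solution $x:\{0,1,\dots,N\}\to\mathbb{R}$.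
   Context: $\Delta x(k-1)=x(k)-x(k-1)$, so $\Delta^2x(k-1)=x(k+1)-2x(k)+x(k-1)$. *)

(* Defs.v *)
From Stdlib Require Import Reals.
Open Scope R_scope.

Definition cont_on_strip (g : R -> R -> R) : Prop :=
  forall t x, 0 <= t <= 1 ->
    forall eps, 0 < eps -> exists delta, 0 < delta /\
      forall s y, 0 <= s <= 1 -> Rabs (s - t) < delta -> Rabs (y - x) < delta ->
        Rabs (g s y - g t x) < eps.

(* Second difference: Delta^2 x (k-1) = x(k+1) - 2 x(k) + x(k-1). *)
Definition delta2 (x : nat -> R) (k : nat) : R :=
  x (S k) - 2 * x k + x (pred k).

Definition is_solution (N : nat) (f : R -> R -> R) (v : R -> R) (x : nat -> R) : Prop :=
  x 0%nat = 0 /\ x N = 0 /\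
  forall k : nat, (1 <= k <= N - 1)%nat ->
    delta2 x k = / (INR N)^2 * f (INR k / INR N) (x k)
                 + / (INR N)^2 * v (INR k / INR N).

(* Main.v *)
Require Import Defs.
From Stdlib Require Import Reals Lra Lia Psatz Classical.
Open Scope R_scope.

Fixpoint ssum (g : nat -> R) (n : nat) : R :=
  match n with O => 0 | S n => ssum g n + g n end.

Lemma ssum_le g h n : (forall k, (k < n)%nat -> g k <= h k) -> ssum g n <= ssum h n.
Proof. induction n; simpl; intros H. lra.
  assert (g n <= h n) by (apply H; lia).
  assert (ssum g n <= ssum h n) by (apply IHn; intros; apply H; lia). lra. Qed.

Lemma ssum_lin a b g n : ssum (fun k => a * g k + b) n = a * ssum g n + INR n * b.
Proof. induction n; simpl ssum. simpl; ring. rewrite IHn, S_INR; ring. Qed.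

Lemma ssum_nonneg g n : (forall k, (k<n)%nat -> 0 <= g k) -> 0 <= ssum g n.
Proof. induction n; simpl; intros H. lra.
  assert (0 <= g n) by (apply H; lia).
  assert (0 <= ssum g n) by (apply IHn; intros; apply H; lia). lra. Qed.

Lemma ssum_ge_term g n k : (forall k, (k<n)%nat -> 0 <= g k) -> (k < n)%nat -> g k <= ssum g n.
Proof. induction n; intros H Hk. lia. simpl. destruct (Nat.eq_dec k n).
  - subst. assert (0 <= ssum g n) by (apply ssum_nonneg; intros; apply H; lia). lra.
  - assert (g k <= ssum g n) by (apply IHn; [intros; apply H; lia| lia]).
    assert (0 <= g n) by (apply H; lia). lra. Qed.

Lemma ssum_mono g n m : (forall k, 0 <= g k) -> (n <= m)%nat -> ssum g n <= ssum g m.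
Proof. intros H Hnm. induction Hnm; simpl. lra. specialize (H m). lra. Qed.

Definition D2 (w : nat -> R) n := ssum (fun j => (w (S j) - w j) * (w (S j) - w j)) n.

Lemma energy_gen (w : nat -> R) : w 0%nat = 0 -> forall n,
  ssum (fun j => delta2 w (S j) * w (S j)) n = (w (S n) - w n) * w n - D2 w n.
Proof. intros H0; unfold D2; induction n; simpl ssum. rewrite H0; ring.
  rewrite IHn; unfold delta2; simpl pred; ring. Qed.

Lemma energy (w : nat -> R) (N : nat) : (1 <= N)%nat -> w 0%nat = 0 -> w N = 0 ->
  ssum (fun j => delta2 w (S j) * w (S j)) (N-1) = - D2 w N.
Proof. intros HN H0 HN0. destruct N as [|n]. lia.
  replace (S n - 1)%nat with n by lia. rewrite energy_gen by auto.
  unfold D2; simpl ssum. rewrite HN0. ring. Qed.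

Lemma poinc_gen (w : nat -> R) : w 0%nat = 0 -> forall k,
  w k * w k <= INR k * D2 w k.
Proof. intros H0; unfold D2; induction k. simpl. rewrite H0; lra.
  simpl ssum. rewrite S_INR.
  set (P := ssum (fun j => (w (S j) - w j) * (w (S j) - w j)) k) in *.
  assert (0 <= P) by (apply ssum_nonneg; intros; apply Rle_0_sqr).
  assert (0 <= INR k) by apply pos_INR.
  replace (w (S k)) with (w k + (w (S k) - w k)) by ring.
  replace (w k + (w (S k) - w k) - w k) with (w (S k) - w k) by ring.
  set (d := w (S k) - w k).
  destruct (Req_dec (INR k) 0) as [Hk|Hk].
  - rewrite Hk in IHk. assert (w k = 0) by nra. rewrite H2, Hk. nra.
  - assert (0 < INR k) by lra.
    assert (2 * w k * d <= P + INR k * d * d).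
    { apply Rmult_le_reg_l with (INR k); [lra|].
      pose proof (Rle_0_sqr (INR k * d - w k)). unfold Rsqr in *. nra. }
    nra.
Qed.

Lemma poinc (w : nat -> R) (N : nat) : (1 <= N)%nat -> w 0%nat = 0 ->
  / (INR N)^2 * ssum (fun j => w (S j) * w (S j)) (N-1) <= D2 w N.
Proof. intros HN H0.
  assert (HD : forall k, (k <= N)%nat -> w k * w k <= INR N * D2 w N).
  { intros k Hk. eapply Rle_trans. apply poinc_gen; auto.
    assert (0 <= D2 w k) by (apply ssum_nonneg; intros; apply Rle_0_sqr).
    assert (D2 w k <= D2 w N) by (apply ssum_mono; auto; intros; apply Rle_0_sqr).
    assert (INR k <= INR N) by (apply le_INR; auto).
    assert (0 <= INR k) by apply pos_INR. nra. }
  assert (ssum (fun j => w (S j) * w (S j)) (N-1) <= ssum (fun j => 0 * w j + INR N * D2 w N) (N-1)).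
  { apply ssum_le. intros k Hk. rewrite Rmult_0_l, Rplus_0_l. apply HD. lia. }
  rewrite ssum_lin in H. rewrite Rmult_0_l, Rplus_0_l in H.
  assert (HN' : 0 < INR N) by (apply lt_0_INR; lia).
  assert (INR (N-1) <= INR N) by (apply le_INR; lia).
  assert (0 <= D2 w N) by (apply ssum_nonneg; intros; apply Rle_0_sqr).
  assert (0 <= INR (N-1)) by apply pos_INR.
  assert (ssum (fun j => w (S j) * w (S j)) (N-1) <= INR N ^ 2 * D2 w N).
  { eapply Rle_trans; [exact H|]. assert (HH: 0 <= INR N * D2 w N) by nra.
    pose proof (Rmult_le_compat_r _ _ _ HH H2). simpl. nra. }
  apply Rmult_le_reg_l with (INR N ^ 2). nra.
  rewrite <- Rmult_assoc, Rinv_r by nra. lra.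
Qed.

Lemma mono_f (f fx : R -> R -> R) m t :
  (forall x, derivable_pt_lim (fun y => f t y) x (fx t x)) ->
  (forall x, m <= fx t x) ->
  forall a b, m * ((a - b) * (a - b)) <= (f t a - f t b) * (a - b).
Proof.
  intros Hd Hm.
  set (g := fun y => f t y - m * y).
  assert (Hg : forall x, derivable_pt_lim g x (fx t x - m)).
  { intro x. pose proof (derivable_pt_lim_scal id m x 1 (derivable_pt_lim_id x)) as H2.
    unfold mult_real_fct, id in H2. rewrite Rmult_1_r in H2.
    pose proof (derivable_pt_lim_minus _ _ x _ _ (Hd x) H2) as H. unfold minus_fct in H.
    exact H. }
  assert (pr : derivable g) by (intro x; exists (fx t x - m); apply Hg).
  assert (Hinc : increasing g).
  { apply (nonneg_derivative_1 g pr). intro x. rewrite (derive_pt_eq_0 _ _ _ _ (Hg x)).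
    specialize (Hm x). lra. }
  intros a b. destruct (Rle_dec a b) as [Hab|Hab].
  - pose proof (Hinc a b Hab). unfold g in H. nra.
  - assert (b <= a) by lra. pose proof (Hinc b a H). unfold g in H0. nra.
Qed.

Lemma uniq_gen (N : nat) (f fx : R -> R -> R) (v : R -> R) m (x y : nat -> R) :
  (2 <= N)%nat ->
  (forall t x, 0 <= t <= 1 -> derivable_pt_lim (fun y => f t y) x (fx t x)) ->
  -1 < m -> (forall t x, 0 <= t <= 1 -> m <= fx t x) ->
  x 0%nat = y 0%nat -> x N = y N ->
  (forall k : nat, (1 <= k <= N - 1)%nat ->
    delta2 x k = / (INR N)^2 * f (INR k / INR N) (x k) + / (INR N)^2 * v (INR k / INR N)) ->
  (forall k : nat, (1 <= k <= N - 1)%nat ->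
    delta2 y k = / (INR N)^2 * f (INR k / INR N) (y k) + / (INR N)^2 * v (INR k / INR N)) ->
  forall k, (k <= N)%nat -> x k = y k.
Proof.
  intros HN Hd Hm1 Hm Hx0 HxN Hx Hy.
  set (w := fun k => x k - y k).
  set (c := / (INR N)^2).
  assert (HNp : 0 < INR N) by (apply lt_0_INR; lia).
  assert (Hc : 0 < c) by (unfold c; apply Rinv_0_lt_compat; nra).
  set (mu := Rmin m 0).
  assert (Hmu1 : -1 < mu) by (unfold mu, Rmin; destruct (Rle_dec m 0); lra).
  assert (Hmu0 : mu <= 0) by (unfold mu, Rmin; destruct (Rle_dec m 0); lra).
  assert (Hmum : mu <= m) by (unfold mu, Rmin; destruct (Rle_dec m 0); lra).
  assert (Hw0 : w 0%nat = 0) by (unfold w; lra).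
  assert (HwN : w N = 0) by (unfold w; lra).
  pose proof (energy w N ltac:(lia) Hw0 HwN) as HE.
  pose proof (poinc w N ltac:(lia) Hw0) as HP. fold c in HP.
  set (S2 := ssum (fun j => w (S j) * w (S j)) (N-1)) in *.
  assert (HL : ssum (fun j => (c*mu) * (w (S j) * w (S j)) + 0) (N-1)
             <= ssum (fun j => delta2 w (S j) * w (S j)) (N-1)).
  { apply ssum_le. intros j Hj.
    assert (Ht : 0 <= INR (S j) / INR N <= 1).
    { split. apply Rmult_le_pos. apply pos_INR. left; apply Rinv_0_lt_compat; lra.
      apply Rmult_le_reg_r with (INR N); [lra|]. unfold Rdiv; rewrite Rmult_assoc, Rinv_l by lra.
      rewrite Rmult_1_r, Rmult_1_l. apply le_INR; lia. }
    assert (delta2 w (S j) = c * (f (INR (S j) / INR N) (x (S j)) - f (INR (S j) / INR N) (y (S j)))).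
    { pose proof (Hx (S j) ltac:(lia)). pose proof (Hy (S j) ltac:(lia)). unfold delta2 in *. fold c in H, H0. unfold w. lra. }
    rewrite H.
    pose proof (mono_f f fx m _ (fun z => Hd _ z Ht) (fun z => Hm _ z Ht) (x (S j)) (y (S j))).
    unfold w. assert (0 <= (x (S j) - y (S j)) * (x (S j) - y (S j))) by apply Rle_0_sqr.
    assert (mu * ((x (S j) - y (S j)) * (x (S j) - y (S j))) <= m * ((x (S j) - y (S j)) * (x (S j) - y (S j)))) by (apply Rmult_le_compat_r; auto).
    rewrite Rplus_0_r, Rmult_assoc, (Rmult_assoc c). apply Rmult_le_compat_l; lra. }
  rewrite ssum_lin in HL. fold S2 in HL.
  assert (0 <= S2) by (apply ssum_nonneg; intros; apply Rle_0_sqr).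
  rewrite Rmult_0_r, Rplus_0_r in HL.
  assert (HS1 : (c * (1 + mu)) * S2 <= 0) by lra.
  assert (HS : S2 <= 0).
  { destruct (Rle_dec S2 0); auto. exfalso.
    assert (0 < (c * (1 + mu)) * S2). apply Rmult_lt_0_compat; [apply Rmult_lt_0_compat|]; lra. lra. }
  intros k Hk.
  destruct k as [|k']. auto.
  destruct (Nat.eq_dec (S k') N) as [E|E]. rewrite E; auto.
  pose proof (ssum_ge_term (fun j => w (S j) * w (S j)) (N-1) k' ltac:(intros; apply Rle_0_sqr) ltac:(lia)).
  fold S2 in H0. simpl in H0.
  assert (w (S k') = 0) by nra. unfold w in H1. lra.
Qed.

Fixpoint shoot2 (N:nat) (f : R->R->R) (v:R->R) (s : R) (k:nat) : R * R :=
  match k with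
  | O => (0, s)
  | S k => let p := shoot2 N f v s k in
       (snd p, 2 * snd p - fst p + (/ (INR N)^2 * f (INR (S k) / INR N) (snd p)
                                   + / (INR N)^2 * v (INR (S k) / INR N)))
  end.
Definition X N f v s k := fst (shoot2 N f v s k).

Lemma X0 N f v s : X N f v s 0 = 0. Proof. reflexivity. Qed.
Lemma X1 N f v s : X N f v s 1 = s. Proof. reflexivity. Qed.
Lemma XSS N f v s k : X N f v s (S (S k)) = 2 * X N f v s (S k) - X N f v s k +
   (/ (INR N)^2 * f (INR (S k) / INR N) (X N f v s (S k)) + / (INR N)^2 * v (INR (S k) / INR N)).
Proof. reflexivity. Qed.

Lemma X_delta2 N f v s k : delta2 (X N f v s) (S k) =
   / (INR N)^2 * f (INR (S k) / INR N) (X N f v s (S k)) + / (INR N)^2 * v (INR (S k) / INR N).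
Proof. unfold delta2. rewrite XSS. simpl pred. ring. Qed.

Lemma X_cont N f v (Hf : forall k, (k <= N)%nat -> forall y, continuity_pt (f (INR k / INR N)) y) :
  forall s0 k, (S k <= N)%nat ->
  continuity_pt (fun s => X N f v s k) s0 /\ continuity_pt (fun s => X N f v s (S k)) s0.
Proof.
  intros s0 k. induction k; intros Hk.
  - split. change (continuity_pt (fun _ => 0) s0). apply continuity_pt_const. intros a b; reflexivity.
    change (continuity_pt id s0). apply derivable_continuous_pt, derivable_pt_id.
  - destruct IHk as [H1 H2]. lia. split. exact H2.
    change (continuity_pt (fun s => 2 * X N f v s (S k) - X N f v s k +
   (/ (INR N)^2 * f (INR (S k) / INR N) (X N f v s (S k)) + / (INR N)^2 * v (INR (S k) / INR N))) s0).
    apply continuity_pt_plus. apply continuity_pt_minus.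
    apply continuity_pt_scal with (f := fun s => X N f v s (S k)) (a := 2). exact H2. exact H1.
    apply continuity_pt_plus.
    apply continuity_pt_scal with (f := fun s => f (INR (S k) / INR N) (X N f v s (S k))).
    apply continuity_pt_comp with (f1 := fun s => X N f v s (S k)) (f2 := f (INR (S k) / INR N)).
    exact H2. apply Hf. lia.
    apply continuity_pt_const. intros a b; reflexivity.
Qed.

Lemma term_bound A K u F c : 0 < A < 1 -> 0 < c -> Rabs F <= A * Rabs u + K ->
  (-(c*(1+A)/2)) * (u*u) + -(c*(K*K/(2*(1-A)))) <= c*F*u.
Proof.
  intros HA Hc HF.
  set (au := Rabs u). assert (Hau : 0 <= au) by apply Rabs_pos.
  assert (Huu : u * u = au * au) by (unfold au; rewrite <- Rabs_mult; symmetry; apply Rabs_pos_eq; apply Rle_0_sqr).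
  assert (HFu : - (Rabs F * au) <= F * u).
  { unfold au; rewrite <- Rabs_mult. pose proof (Rle_abs (-(F*u))). rewrite Rabs_Ropp in H. lra. }
  assert (H1 : Rabs F * au <= (A * au + K) * au) by (apply Rmult_le_compat_r; auto).
  set (e := 1 - A). assert (He : 0 < e) by (unfold e; lra).
  assert (H2 : K * au <= e/2 * (au*au) + K*K/(2*e)).
  { apply Rmult_le_reg_l with (2*e). lra.
    replace (2*e*(e/2*(au*au) + K*K/(2*e))) with (e*e*(au*au) + K*K) by (field; lra).
    pose proof (Rle_0_sqr (e*au - K)). unfold Rsqr in H. nra. }
  assert (H3 : -((1+A)/2 * (u*u) + K*K/(2*e)) <= F * u).
  { rewrite Huu. unfold e in *. lra. }
  replace ((-(c*(1+A)/2)) * (u*u) + -(c*(K*K/(2*e)))) with (c * (-((1+A)/2 * (u*u) + K*K/(2*e)))) by (field; lra).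
  rewrite Rmult_assoc. apply Rmult_le_compat_l; lra.
Qed.

Lemma sq_abs x r : 0 <= r -> x * x <= r * r -> Rabs x <= r.
Proof. intros Hr H. destruct (Rcase_abs x) as [Hx|Hx].
  - rewrite Rabs_left by lra. nra.
  - rewrite Rabs_right by lra. nra. Qed.

Lemma apriori N f v A B s :
  (2 <= N)%nat -> 0 < A < 1 -> 0 < B ->
  (forall t x, 0 <= t <= 1 -> Rabs (f t x) <= A * Rabs x + B) ->
  Rabs s <= Rabs (X N f v s N) + INR N * (A * Rabs (X N f v s N) + B
             + ssum (fun k => Rabs (v (INR k / INR N))) (S N)) / (1 - A).
Proof.
  intros HN HA HB Hf.
  set (V := ssum (fun k => Rabs (v (INR k / INR N))) (S N)).
  set (x := X N f v s). set (b := x N).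
  assert (HNp : 0 < INR N) by (apply lt_0_INR; lia).
  set (z := fun k => x k - INR k / INR N * b).
  set (c := / (INR N)^2).
  assert (Hc : 0 < c) by (unfold c; apply Rinv_0_lt_compat; nra).
  set (K := A * Rabs b + B + V).
  assert (Hz0 : z 0%nat = 0) by (unfold z, x; rewrite X0; simpl; field; lra).
  assert (HzN : z N = 0) by (unfold z; fold b; field; lra).
  assert (Hdz : forall j, delta2 z (S j) = delta2 x (S j)).
  { intro j. unfold delta2, z. simpl pred. rewrite !S_INR. field. lra. }
  pose proof (energy z N ltac:(lia) Hz0 HzN) as HE.
  pose proof (poinc z N ltac:(lia) Hz0) as HP. fold c in HP.
  set (S2 := ssum (fun j => z (S j) * z (S j)) (N-1)) in *.
  assert (HL : ssum (fun j => (-(c*(1+A)/2)) * (z (S j) * z (S j)) + -(c*(K*K/(2*(1-A))))) (N-1)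
             <= ssum (fun j => delta2 z (S j) * z (S j)) (N-1)).
  { apply ssum_le. intros j Hj.
    assert (Ht : 0 <= INR (S j) / INR N <= 1).
    { split. apply Rmult_le_pos. apply pos_INR. left; apply Rinv_0_lt_compat; lra.
      apply Rmult_le_reg_r with (INR N); [lra|]. unfold Rdiv; rewrite Rmult_assoc, Rinv_l by lra.
      rewrite Rmult_1_r, Rmult_1_l. apply le_INR; lia. }
    rewrite Hdz. unfold x. rewrite X_delta2. fold x. fold c.
    rewrite <- Rmult_plus_distr_l.
    apply term_bound; auto.
    eapply Rle_trans. apply Rabs_triang.
    assert (Hv : Rabs (v (INR (S j) / INR N)) <= V).
    { unfold V. apply (ssum_ge_term (fun k => Rabs (v (INR k / INR N)))). intros; apply Rabs_pos. lia. }
    assert (Hx : Rabs (x (S j)) <= Rabs (z (S j)) + Rabs b).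
    { replace (x (S j)) with (z (S j) + INR (S j) / INR N * b) by (unfold z; ring).
      eapply Rle_trans. apply Rabs_triang. rewrite Rabs_mult.
      rewrite (Rabs_pos_eq (INR (S j) / INR N)) by lra.
      pose proof (Rabs_pos b). nra. }
    pose proof (Hf _ (x (S j)) Ht). unfold K. nra. }
  rewrite ssum_lin in HL. fold S2 in HL. rewrite HE in HL.
  assert (HS2 : 0 <= S2) by (apply ssum_nonneg; intros; apply Rle_0_sqr).
  set (r := K / (1 - A)).
  assert (HK : 0 <= K) by (unfold K, V; pose proof (Rabs_pos b);
     assert (0 <= ssum (fun k => Rabs (v (INR k / INR N))) (S N)) by (apply ssum_nonneg; intros; apply Rabs_pos); nra).
  assert (Hr : 0 <= r) by (unfold r; apply Rmult_le_pos; [lra| left; apply Rinv_0_lt_compat; lra]).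
  assert (HS : S2 <= INR (N-1) * (r * r)).
  { assert (c * ((1 - A)/2) * S2 <= c * (INR (N-1) * (K*K/(2*(1-A))))) by lra.
    assert ((1-A)/2 * S2 <= INR (N-1) * (K*K/(2*(1-A)))).
    { apply Rmult_le_reg_l with c; auto. lra. }
    replace (INR (N-1) * (r*r)) with (2/(1-A) * (INR (N-1) * (K*K/(2*(1-A))))) by (unfold r; field; lra).
    apply Rmult_le_reg_l with ((1-A)/2). lra.
    replace ((1 - A) / 2 * (2 / (1 - A) * (INR (N - 1) * (K * K / (2 * (1 - A)))))) with
      (INR (N - 1) * (K * K / (2 * (1 - A)))) by (field; lra). lra. }
  pose proof (ssum_ge_term (fun j => z (S j) * z (S j)) (N-1) 0 ltac:(intros; apply Rle_0_sqr) ltac:(lia)) as H1.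
  fold S2 in H1. simpl in H1.
  assert (Hz1 : z 1%nat = s - b / INR N) by (unfold z, x; rewrite X1; simpl; field; lra).
  assert (HN1 : INR (N-1) <= INR N * INR N).
  { assert (INR (N-1) <= INR N) by (apply le_INR; lia). assert (1 <= INR N) by (apply (le_INR 1); lia). nra. }
  assert (Hb : Rabs (s - b / INR N) <= INR N * r).
  { apply sq_abs. apply Rmult_le_pos; lra. rewrite <- Hz1.
    assert (0 <= r * r) by nra. nra. }
  assert (Hb2 : Rabs (b / INR N) <= Rabs b).
  { unfold Rdiv. rewrite Rabs_mult, Rabs_inv, (Rabs_pos_eq (INR N)) by lra.
    assert (1 <= INR N) by (apply (le_INR 1); lia).
    assert (/ INR N <= 1). { rewrite <- Rinv_1. apply Rinv_le_contravar; lra. }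
    pose proof (Rabs_pos b). assert (0 < / INR N) by (apply Rinv_0_lt_compat; lra). nra. }
  replace s with ((s - b / INR N) + b / INR N) by ring.
  eapply Rle_trans. apply Rabs_triang.
  fold V. fold K. replace (INR N * K / (1 - A)) with (INR N * r) by (unfold r; field; lra). lra.
Qed.

Lemma shoot_pos (g : R -> R) : continuity g -> (forall a b, g a = g b -> a = b) ->
  (forall M, exists S, forall s, Rabs (g s) <= M -> Rabs s <= S) -> 0 < g 0 ->
  exists s, g s = 0.
Proof.
  intros Hc Hi Hb Hg0.
  destruct (Hb (g 0)) as [S HS].
  assert (HS0 : 0 <= S) by (pose proof (HS 0 ltac:(rewrite Rabs_pos_eq; lra)); rewrite Rabs_R0 in H; lra).
  set (p := S + 1). set (q := - (S + 1)).
  assert (Hp : g 0 < Rabs (g p)).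
  { destruct (Rlt_le_dec (g 0) (Rabs (g p))); auto. pose proof (HS p r). unfold p in H.
    rewrite Rabs_pos_eq in H; lra. }
  assert (Hq : g 0 < Rabs (g q)).
  { destruct (Rlt_le_dec (g 0) (Rabs (g q))); auto. pose proof (HS q r). unfold q in H.
    rewrite Rabs_left in H; lra. }
  destruct (Rlt_le_dec (g p) 0) as [Hgp|Hgp].
  { destruct (IVT (fun x => - g x) 0 p) as [z [_ Hz]].
    apply (continuity_opp g Hc). unfold p; lra. lra. lra. exists z; lra. }
  destruct (Rlt_le_dec (g q) 0) as [Hgq|Hgq].
  { destruct (IVT g q 0) as [z [_ Hz]]; auto. unfold q; lra. exists z; auto. }
  rewrite Rabs_pos_eq in Hp, Hq by auto.
  set (y := (g 0 + Rmin (g p) (g q)) / 2).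
  assert (Hy1 : g 0 < y) by (unfold y, Rmin; destruct (Rle_dec (g p) (g q)); lra).
  assert (Hy2 : y < g p) by (unfold y, Rmin; destruct (Rle_dec (g p) (g q)); lra).
  assert (Hy3 : y < g q) by (unfold y, Rmin; destruct (Rle_dec (g p) (g q)); lra).
  assert (Hcy : continuity (fun x => g x - y)).
  { apply (continuity_minus g (fun _ => y)); auto. apply continuity_const. intros a b; auto. }
  assert (Hcy' : continuity (fun x => y - g x)).
  { apply (continuity_minus (fun _ => y) g); auto. apply continuity_const. intros a b; auto. }
  destruct (IVT (fun x => g x - y) 0 p Hcy) as [z1 [Hz1 Ez1]]. unfold p; lra. lra. lra.
  destruct (IVT (fun x => y - g x) q 0 Hcy') as [z2 [Hz2 Ez2]]. unfold q; lra. lra. lra.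
  assert (z1 = z2) by (apply Hi; lra). subst z2.
  assert (z1 = 0) by lra. subst z1. lra.
Qed.

Lemma shoot (g : R -> R) : continuity g -> (forall a b, g a = g b -> a = b) ->
  (forall M, exists S, forall s, Rabs (g s) <= M -> Rabs s <= S) ->
  exists s, g s = 0.
Proof.
  intros Hc Hi Hb. destruct (Rtotal_order (g 0) 0) as [H|[H|H]].
  - destruct (shoot_pos (fun x => - g x)) as [s Hs].
    apply (continuity_opp g Hc).
    intros a b E. apply Hi. lra.
    intros M. destruct (Hb M) as [S HS]. exists S. intros s Hs. apply HS. rewrite <- Rabs_Ropp. auto.
    lra. exists s; lra.
  - exists 0; auto.
  - apply shoot_pos; auto.
Qed.

Theorem theorem5 (N : nat) (f : R -> R -> R) (v : R -> R) :
  (2 <= N)%nat ->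
  (* v continuous on [0,1] *)
  (forall t, 0 <= t <= 1 -> forall eps, 0 < eps -> exists delta, 0 < delta /\
     forall s, 0 <= s <= 1 -> Rabs (s - t) < delta -> Rabs (v s - v t) < eps) ->
  (* (C(c)) *)
  cont_on_strip f ->
  forall fx : R -> R -> R,
  (forall t x, 0 <= t <= 1 -> derivable_pt_lim (fun y => f t y) x (fx t x)) ->
  cont_on_strip fx ->
  (* (D(f)) *)
  (exists A B, 0 < A /\ A < 1 /\ 0 < B /\
     forall t x, 0 <= t <= 1 -> Rabs (f t x) <= A * Rabs x + B) ->
  (* (D(f_x)): inf f_x > -1, i.e. some lower bound m > -1 *)
  (exists m, -1 < m /\ forall t x, 0 <= t <= 1 -> m <= fx t x) ->
  (exists x : nat -> R, is_solution N f v x) /\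
  (forall x y : nat -> R, is_solution N f v x -> is_solution N f v y ->
     forall k, (k <= N)%nat -> x k = y k).
Proof.
  intros HN _ _ fx Hd _ [A [B [HA [HA1 [HB Hfb]]]]] [m [Hm1 Hm]].
  assert (HNp : 0 < INR N) by (apply lt_0_INR; lia).
  split.
  - set (V := ssum (fun k => Rabs (v (INR k / INR N))) (S N)).
    destruct (shoot (fun s => X N f v s N)) as [s Hs].
    + intro s0.
      assert (Hf' : forall k, (k <= N)%nat -> forall y, continuity_pt (f (INR k / INR N)) y).
      { intros k Hk y.
        assert (Ht : 0 <= INR k / INR N <= 1).
        { split. apply Rmult_le_pos. apply pos_INR. left; apply Rinv_0_lt_compat; lra.
          apply Rmult_le_reg_r with (INR N); [lra|]. unfold Rdiv; rewrite Rmult_assoc, Rinv_l by lra.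
          rewrite Rmult_1_r, Rmult_1_l. apply le_INR; lia. }
        apply derivable_continuous_pt. exists (fx (INR k / INR N) y). apply Hd. auto. }
      pose proof (X_cont N f v Hf' s0 (N-1) ltac:(lia)) as [_ H].
      replace (S (N-1)) with N in H by lia. exact H.
    + intros a b E.
      assert (Hu := uniq_gen N f fx v m (X N f v a) (X N f v b) HN Hd Hm1 Hm
        ltac:(rewrite !X0; auto) E).
      rewrite <- (X1 N f v a), <- (X1 N f v b). apply Hu.
      intros k Hk. destruct k as [|j]. lia. apply X_delta2.
      intros k Hk. destruct k as [|j]. lia. apply X_delta2. lia.
    + intros M. exists (M + INR N * (A * M + B + V) / (1 - A)). intros s Hs.
      eapply Rle_trans. apply (apriori N f v A B s HN (conj HA HA1) HB Hfb).
      fold V.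
      assert (INR N * (A * Rabs (X N f v s N) + B + V) / (1 - A) <= INR N * (A * M + B + V) / (1 - A)).
      { unfold Rdiv. apply Rmult_le_compat_r. left; apply Rinv_0_lt_compat; lra.
        apply Rmult_le_compat_l. lra. nra. }
      lra.
    + exists (X N f v s). split. apply X0. split. exact Hs.
      intros k Hk. destruct k as [|j]. lia. apply X_delta2.
  - intros x y [Hx0 [HxN Hx]] [Hy0 [HyN Hy]].
    apply (uniq_gen N f fx v m x y HN Hd Hm1 Hm); auto; congruence.
Qed.
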